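(* Let $\Omega$ be a topological signature and $X$ a topological space such that $X$ and every $\Omega_n$ are 0-dimensional spaces. Then the topological algebra $T_\Omega(X)$ is residually finite. Moreover, the unique continuous homomorphism $T_\Omega(X)\to\overline{\Omega}_X\mathcal{S}t_\Omega$ extending the natural generating mapping $X\to\overline{\Omega}_X\mathcal{S}t_\Omega$ is injective and is a homeomorphism of $T_\Omega(X)$ onto the subalgebra of $\overline{\Omega}_X\mathcal{S}t_\Omega$ (algebraically) generated by the image of $X$.
   Context: A space is 0-dimensional if it is $T_1$ and its clopen subsets form a basis. $T_\Omega(X)$ is the term algebra (absolutely free $\Omega$-algebra) on $X$, whose elements are finite ordered trees with leaves labeled in $X\uplus\Omega_0$ and nodes with $k$ children labeled in $\Omega_k$; it is topologized as the topological sum, over all tree shapes, of the product of the label spaces of the nodes (a net converges to $t$ iff eventually it has the shape of $t$ and the labels at each node converge). It is a topological $\Omega$-algebra, and $X$ embeds as single-node trees. A topological algebra is residually finite if any two distinct elements are separated by a continuous homomorphism into a finite discrete topological $\Omega$-algebra. A Stone topological algebra is a topological $\Omega$-algebra (continuous evaluation maps $\Omega_n\times A^n\to A$) whose space is compact Hausdorff 0-dimensional; $\mathcal{S}t_\Omega$ is the class of all Stone topological $\Omega$-algebras. $\overline{\Omega}_X\mathcal{S}t_\Omega$ is the free Stone topological algebra over $X$: a Stone topological algebra with a continuous map $\iota:X\to\overline{\Omega}_X\mathcal{S}t_\Omega$ whose image generates a dense subalgebra, such that every continuous map from $X$ to a Stone topological $\Omega$-algebra $T$ extends uniquely as $\hat\varphi\circ\iota$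 with $\hat\varphi$ a continuous homomorphism. *)

(* Defs.v *)
From HB Require Import structures.
From mathcomp Require Import all_boot.
From mathcomp Require Import boolp classical_sets functions cardinality topology.
Set Implicit Arguments. Unset Strict Implicit. Unset Printing Implicit Defensive.
Local Open Scope classical_set_scope.

Section Terms.
Variables (Omega : nat -> topologicalType) (X : topologicalType).

Inductive term : Type :=
| Var : X -> term
| Op : forall n : nat, Omega n -> {ffun 'I_n -> term} -> term.

Inductive basic_nbhd : term -> set term -> Prop :=
| bn_var (x : X) (U : set X) : open U -> U x ->
    basic_nbhd (Var x) [set t | exists2 y, U y & t = Var y]
| bn_op (n : nat) (o : Omega n) (ts : {ffun 'I_n -> term})
    (V : set (Omega n)) (B : 'I_n -> set term) :
    open V -> V o -> (forall i, basic_nbhd (ts i) (B i)) ->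
    basic_nbhd (Op o ts)
      [set t | exists o' ts', [/\ t = Op o' ts', V o' & forall i, B i (ts' i)]].
End Terms.

Section TermTopology.
Variables (Omega : nat -> topologicalType) (X : topologicalType).
Local Notation T := (term Omega X).

HB.instance Definition _ := gen_eqMixin T.
HB.instance Definition _ := gen_choiceMixin T.

(* The topology of T_Omega(X): the topological sum over tree shapes of the
   products of the label spaces. *)
Definition term_basis : set (set T) := [set B | exists t, basic_nbhd t B].

HB.instance Definition _ :=
  @isSubBaseTopological.Build T (set T) term_basis id.
End TermTopology.

Definition ops (Omega : nat -> Type) (A : Type) :=
  forall n : nat, Omega n -> ('I_n -> A) -> A.

Definition top_alg (Omega : nat -> topologicalType) (A : topologicalType)
    (op : ops Omega A) : Prop :=
  forall n : nat,
    continuous (fun p : Omega n * {ptws 'I_n -> A} => op n p.1 p.2).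

Definition is_hom (Omega : nat -> Type) (A B : Type)
    (opA : ops Omega A) (opB : ops Omega B) (f : A -> B) : Prop :=
  forall n (o : Omega n) (a : 'I_n -> A), f (opA n o a) = opB n o (f \o a).

Definition closed_under (Omega : nat -> Type) (A : Type) (op : ops Omega A)
    (S : set A) : Prop :=
  forall n (o : Omega n) (a : 'I_n -> A), (forall i, S (a i)) -> S (op n o a).

Definition generated_subalg (Omega : nat -> Type) (A : Type) (op : ops Omega A)
    (G : set A) : set A :=
  [set y | forall S : set A, G `<=` S -> closed_under op S -> S y].

Definition zero_dim (T : topologicalType) : Prop :=
  @accessible_space T /\
  forall (x : T) (U : set T), open U -> U x ->
    exists V : set T, [/\ clopen V, V x & V `<=` U].

Definition residually_finite (Omega : nat -> topologicalType)
    (A : topologicalType) (op : ops Omega A) : Prop :=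
  forall a b : A, a <> b ->
    exists (F : topologicalType) (opF : ops Omega F) (h : A -> F),
      [/\ finite_set [set: F], (forall U : set F, open U), top_alg opF &
          [/\ continuous h, is_hom op opF h & h a <> h b]].

Definition stone_alg (Omega : nat -> topologicalType) (A : topologicalType)
    (op : ops Omega A) : Prop :=
  [/\ top_alg op, compact [set: A], @hausdorff_space A & zero_dim A].

Definition free_stone_alg (Omega : nat -> topologicalType) (X : topologicalType)
    (Fr : topologicalType) (opF : ops Omega Fr) (iota : X -> Fr) : Prop :=
  [/\ stone_alg opF, continuous iota,
      dense (generated_subalg opF (range iota)) &
      forall (T : topologicalType) (opT : ops Omega T), stone_alg opT ->
        forall phi : X -> T, continuous phi ->
          exists! hphi : Fr -> T,
            [/\ continuous hphi, is_hom opF opT hphi & phi = hphi \o iota]].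

Definition term_ops (Omega : nat -> topologicalType) (X : topologicalType) :
  ops Omega (term Omega X) := fun n o a => Op o (finfun a).

(* Main.v *)
Require Import Defs.
From mathcomp Require Import all_boot.
From mathcomp Require Import boolp classical_sets functions cardinality topology.
From HB Require Import structures.
From Stdlib Require Import Eqdep_dec PeanoNat.
Set Implicit Arguments. Unset Strict Implicit. Unset Printing Implicit Defensive.
Local Open Scope classical_set_scope.

Section Basics.
Variables (Omega : nat -> topologicalType) (X : topologicalType).
Local Notation T := (term Omega X).

Fixpoint term_rect' (P : T -> Type) (HV : forall x, P (Var Omega x))
  (HO : forall n (o : Omega n) (ts : {ffun 'I_n -> T}), (forall i, P (ts i)) -> P (Op o ts))
  (t : T) : P t :=
  match t with
  | Var x => HV x
  | Op n o ts => HO n o ts (fun i => term_rect' HV HO (ts i))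
  end.

Lemma Op_arity n m (o : Omega n) (o' : Omega m) ts ts' : Op (X:=X) o ts = Op o' ts' -> n = m.
Proof. by move=> e; have := f_equal (fun t : T => match t with Op k _ _ => k | _ => 0 end) e. Qed.

Lemma Op_inj n (o o' : Omega n) ts ts' : Op (X:=X) o ts = Op o' ts' -> o = o' /\ ts = ts'.
Proof.
move=> e; injection e => e1 e2.
split; [exact: (inj_pair2_eq_dec _ Nat.eq_dec _ _ _ _ e2)|exact: (inj_pair2_eq_dec _ Nat.eq_dec _ _ _ _ e1)].
Qed.

Lemma bn_open t (B : set T) : basic_nbhd t B -> open B.
Proof.
move=> bt; exists [set B].
  move=> _ ->; apply: finI_from1; by exists t.
by rewrite bigcup_set1.
Qed.

Lemma bn_mem t (B : set T) : basic_nbhd t B -> B t.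
Proof.
elim=> [x U _ Ux|n o ts V B' _ Vo _ IH]; first by exists x.
by exists o, ts; split.
Qed.

Lemma bn_exists t : exists B : set T, basic_nbhd t B.
Proof.
elim/term_rect': t => [x|n o ts IH].
  by eexists; apply: (@bn_var _ _ x setT) => //; exact: openT.
have [B HB] := choice (fun i => IH i).
by eexists; apply: (@bn_op _ _ n o ts setT B) => //; exact: openT.
Qed.

Lemma bn_inter t1 (B1 : set T) : basic_nbhd t1 B1 ->
  forall t2 B2, basic_nbhd t2 B2 -> forall t, B1 t -> B2 t ->
  exists B, [/\ basic_nbhd t B & B `<=` B1 `&` B2].
Proof.
elim=> [x U oU Ux|n o ts V B' oV Vo _ IH] t2 B2 H2 t.
  case: H2 => [x2 U2 oU2 U2x|m o2 ts2 V2 B2' _ _ _].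
    move=> [y Uy ->] [y2 U2y2 /esym [e]]; subst y2.
    exists [set s | exists2 z, (U `&` U2) z & s = Var _ z]; split.
      by apply: bn_var => //; exact: openI.
    by move=> s [z [Uz U2z] ->]; split; [exists z|exists z].
  by move=> [y _ ->] [o' [ts' []]].
case: H2 => [x2 U2 oU2 U2x|m o2 ts2 V2 B2' oV2 V2o H2].
  by move=> [o' [ts' [-> _ _]]] [y _].
move=> [o' [ts' [-> Vo' Bts']]] [o2' [ts2' [e V2o2' B2ts']]].
have emn := Op_arity e; subst m.
have [eo ets] := Op_inj e; subst o2' ts2'.
have/choice [C HC] : forall i, exists C, basic_nbhd (ts' i) C /\ C `<=` B' i `&` B2' i.
  move=> i; have [C [HC1 HC2]] := IH i _ _ (H2 i) (ts' i) (Bts' i) (B2ts' i).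
  by exists C.
exists [set s | exists o'' ts'', [/\ s = Op o'' ts'', (V `&` V2) o'' & forall i, C i (ts'' i)]].
split.
  apply: bn_op; [exact: openI|by []|by move=> i; case: (HC i)].
move=> s [o'' [ts'' [-> [Vo'' V2o''] Cts'']]]; split.
  by exists o'', ts''; split => // i; case: (HC i) => _ /(_ _ (Cts'' i)) [].
by exists o'', ts''; split => // i; case: (HC i) => _ /(_ _ (Cts'' i)) [].
Qed.

Lemma nbhs_termP t (N : set T) :
  nbhs t N <-> exists B, basic_nbhd t B /\ B `<=` N.
Proof.
split; last first.
  move=> [B [HB BN]]; apply: (@filterS _ _ _ B) => //; apply: open_nbhs_nbhs; split.
    exact: bn_open HB.
  exact: bn_mem.
rewrite nbhsE => -[O [oO Ot] ON].
move: oO => [D' sD' eO].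
move: Ot; rewrite -eO => -[C DC Ct]; have [F sF eC] := sD' _ DC.
pose BN := [set A : set T | exists B, basic_nbhd t B /\ B `<=` A].
have BNF : Filter BN.
  split.
  - by have [B HB] := bn_exists t; exists B.
  - move=> P Q [B1 [H1 s1]] [B2 [H2 s2]].
    have [B [HB sB]] := bn_inter H1 H2 (bn_mem H1) (bn_mem H2).
    by exists B; split => // s /sB [/s1 ? /s2 ?].
  - by move=> P Q PQ [B [HB sB]]; exists B; split => // s /sB /PQ.
have : BN C.
  rewrite -eC; apply: filter_bigI => A AF.
  have := sF _ AF; rewrite inE => -[t' HA].
  have At : A t by move: Ct; rewrite -eC; apply.
  change (BN A).
  have [B0 HB0] := bn_exists t.
  have [B [HB sB]] := bn_inter HA HB0 At (bn_mem HB0).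
  by exists B; split => // s /sB [].
move=> [B [HB sB]]; exists B; split => //.
by move=> s /sB Cs; apply: ON; rewrite -eO; exists C.
Qed.

End Basics.


Section Rec.
Variables (Omega : nat -> topologicalType) (X : topologicalType).
Local Notation T := (term Omega X).

Definition good (F : finType) (d : ops Omega F) (phi : T -> F) :=
  [/\ is_hom (@term_ops Omega X) d phi,
      (forall n (a : 'I_n -> F) (o : Omega n), exists U : set (Omega n),
          [/\ open U, U o & forall o', U o' -> d n o' a = d n o a]) &
      (forall x, exists U : set X,
          [/\ open U, U x & forall y, U y -> phi (Var _ y) = phi (Var _ x)])].

Definition sat (F : Type) (phi : T -> F) (B : set T) :=
  forall s s', phi s = phi s' -> B s -> B s'.

Definition Rec (B : set T) :=
  exists (F : finType) (d : ops Omega F) (phi : T -> F), good d phi /\ sat phi B.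

Lemma hom_Op (F : Type) (d : ops Omega F) (phi : T -> F) :
  is_hom (@term_ops Omega X) d phi ->
  forall n (o : Omega n) (ts : {ffun 'I_n -> T}), phi (Op o ts) = d n o (fun i => phi (ts i)).
Proof. by move=> H n o ts; have := H n o ts; rewrite /term_ops ffunK. Qed.

Lemma good_unit : @good unit (fun _ _ _ => tt) (fun _ => tt).
Proof.
split => //.
- by move=> n a o; exists setT; split => //; exact: openT.
- by move=> x; exists setT; split => //; exact: openT.
Qed.

Lemma good_prod (F1 F2 : finType) d1 d2 (phi1 : T -> F1) (phi2 : T -> F2) :
  good d1 phi1 -> good d2 phi2 ->
  @good (F1 * F2)%type (fun n o a => (d1 n o (fun i => (a i).1), d2 n o (fun i => (a i).2)))
    (fun s => (phi1 s, phi2 s)).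
Proof.
move=> [h1 c1 l1] [h2 c2 l2]; split.
- by move=> n o a /=; rewrite h1 h2.
- move=> n a o; have [U1 [oU1 U1o e1]] := c1 n (fun i => (a i).1) o.
  have [U2 [oU2 U2o e2]] := c2 n (fun i => (a i).2) o.
  exists (U1 `&` U2); split => //; first exact: openI.
  by move=> o' [/e1 -> /e2 ->].
- move=> x; have [U1 [oU1 U1o e1]] := l1 x; have [U2 [oU2 U2o e2]] := l2 x.
  exists (U1 `&` U2); split => //; first exact: openI.
  by move=> y [/e1 -> /e2 ->].
Qed.

Lemma rec_many n (Bs : 'I_n -> set T) : (forall i, Rec (Bs i)) ->
  exists (F : finType) (d : ops Omega F) (phi : T -> F),
    good d phi /\ forall i, sat phi (Bs i).
Proof.
move=> RB.
suff /(_ n) [F [d [phi [g s]]]] : forall m, exists (F : finType) (d : ops Omega F) (phi : T -> F),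
    good d phi /\ forall i : 'I_n, i < m -> sat phi (Bs i).
  by exists F, d, phi; split => // i; apply: s.
elim=> [|m [F [d [phi [g s]]]]].
  by exists unit, (fun _ _ _ => tt), (fun _ => tt); split => //; exact: good_unit.
case: (ltnP m n) => [lt|ge].
  have [F2 [d2 [phi2 [g2 s2]]]] := RB (Ordinal lt).
  eexists; eexists; eexists; split; first exact: good_prod g g2.
  move=> i; rewrite ltnS leq_eqVlt => /orP [/eqP ei|lim].
    have -> : i = Ordinal lt by apply: val_inj.
    by move=> a b [_ e]; apply: s2.
  by move=> a b [e _]; apply: s.
exists F, d, phi; split => // i lim; apply: s.
by apply: (leq_trans (ltn_ord i)).
Qed.

End Rec.


Section Key.
Variables (Omega : nat -> topologicalType) (X : topologicalType).
Hypotheses (hX : zero_dim X) (hO : forall n, zero_dim (Omega n)).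
Local Notation T := (term Omega X).

Lemma key t (B : set T) : basic_nbhd t B -> exists B', [/\ B' t, B' `<=` B & Rec B'].
Proof.
elim=> [x U oU Ux | n o ts V Bc oV Vo _ IH].
  have [_ /(_ x U oU Ux) [W [[oW cW] Wx WU]]] := hX.
  exists [set s | exists2 y, W y & s = Var _ y]; split.
  - by exists x.
  - by move=> s [y Wy ->]; exists y => //; apply: WU.
  exists bool, (fun _ _ _ => false),
    (fun s => match s with Var y => `[< W y >] | _ => false end).
  split; first split.
  - by move=> m o' a.
  - by move=> m a o'; exists setT; split => //; exact: openT.
  - move=> y; case: (pselect (W y)) => Wy.
      by exists W; split => // z Wz /=; rewrite (asboolT Wy) (asboolT Wz).
    exists (~` W); split => //; first by rewrite openC.
    by move=> z nWz /=; rewrite (asboolF Wy) (asboolF nWz).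
  move=> s s' + [y Wy es]; subst s => /=; rewrite (asboolT Wy).
  case: s' => [z|m o' ts'] //= /esym /asboolP Wz; by exists z.
have [Wn [[oW cW] Wo WV]] := (hO n).2 o V oV Vo.
have /choice [Bf HBf] := IH.
have RB : forall i, Rec (Bf i) by move=> i; case: (HBf i).
have [F [d [phi [gd st]]]] := rec_many RB.
pose Bnew := [set s : T | exists o' (ts' : {ffun 'I_n -> T}),
   [/\ s = Op o' ts', Wn o' & forall i, Bf i (ts' i)]].
have satnew : forall m (o' : Omega m) (ts1 ts2 : {ffun 'I_m -> T}),
    (forall i, phi (ts1 i) = phi (ts2 i)) -> Bnew (Op o' ts1) -> Bnew (Op o' ts2).
  move=> m o' ts1 ts2 e [o2 [ts3 [e2 Wo2 Bts3]]].
  have emn := Op_arity e2; subst m.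
  have [eo ets] := Op_inj e2; subst o2 ts3.
  by exists o', ts2; split => // i; exact: (st i _ _ (e i) (Bts3 i)).
have nonvar : forall y, ~ Bnew (Var _ y) by move=> y [? [? []]].
exists Bnew; split.
- by exists o, ts; split => // i; case: (HBf i).
- move=> s [o' [ts' [-> Wo' Bts']]]; exists o', ts'; split => //; first exact: WV.
  by move=> i; case: (HBf i) => _ sub _; exact: sub.
have [hd cd ld] := gd.
exists (F * bool)%type,
  (fun m (o' : Omega m) (a : 'I_m -> F * bool) => (d m o' (fun i => (a i).1),
     `[< exists ts1 : {ffun 'I_m -> T}, (forall i, phi (ts1 i) = (a i).1) /\ Bnew (Op o' ts1) >])),
  (fun s => (phi s, `[< Bnew s >])).
split; first split.
- move=> m o' a /=; rewrite hd; congr pair; apply: asbool_equiv_eq; split.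
    by move=> Ba; exists (finfun a); split => // i; rewrite ffunE.
  by move=> [ts1 [e B1]]; apply: satnew B1 => i; rewrite e ffunE.
- move=> m a o'; have [U1 [oU1 U1o c1]] := cd m (fun i => (a i).1) o'.
  case: (pselect (exists ts1 : {ffun 'I_m -> T}, forall i, phi (ts1 i) = (a i).1)) =>
     [[ts0 e0]|nex]; last first.
    exists U1; split => // o'' /c1 -> /=; congr pair.
    by rewrite !asboolF // => -[ts1 [e1 _]]; apply: nex; exists ts1.
  have E : forall o'', `[< exists ts1 : {ffun 'I_m -> T}, (forall i, phi (ts1 i) = (a i).1)
        /\ Bnew (Op o'' ts1) >] = `[< Bnew (Op o'' ts0) >].
    move=> o''; apply: asbool_equiv_eq; split => [[ts1 [e1 B1]]|B0]; last by exists ts0.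
    by apply: satnew B1 => i; rewrite e1 e0.
  case: (Nat.eq_dec m n) => [emn|nmn]; last first.
    exists U1; split => // o'' /c1 -> /=; congr pair; rewrite !E !asboolF //.
      by move=> [o2 [ts2 [/Op_arity e2 _ _]]].
    by move=> [o2 [ts2 [/Op_arity e2 _ _]]].
  subst m.
  have E2 : forall o'', Bnew (Op o'' ts0) <-> Wn o'' /\ forall i, Bf i (ts0 i).
    move=> o''; split => [[o2 [ts2 [e2 W2 B2]]]|[W2 B2]]; last by exists o'', ts0.
    by have [-> ->] := Op_inj e2.
  case: (pselect (Wn o')) => Wo'.
    exists (U1 `&` Wn); split => //; first exact: openI.
    move=> o'' [/c1 -> Wo''] /=; congr pair; rewrite !E; apply: asbool_equiv_eq.
    by split => /E2 [_ ?]; apply/E2.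
  exists (U1 `&` ~` Wn); split => //; first by apply: openI => //; rewrite openC.
  move=> o'' [/c1 -> Wo''] /=; congr pair; rewrite !E; apply: asbool_equiv_eq.
  by split => /E2 [].
- move=> x; have [U [oU Ux c]] := ld x.
  exists U; split => // y Uy /=; rewrite c //; congr pair.
  by rewrite !asboolF.
move=> s s' [_ e] Bs; apply/asboolP; by rewrite -e (asboolT Bs).
Qed.
End Key.


Lemma ptws_set1 (n : nat) (F : topologicalType) (hF : forall x : F, nbhs x [set x]) (a : {ptws 'I_n -> F}) :
  nbhs a [set a].
Proof.
have H : forall i, \forall b \near a, (b : {ptws 'I_n -> F}) i = a i.
  move=> i; exact: (@proj_continuous _ (fun _ => F) i a [set a i] (hF _)).
apply: (@filterS _ _ _ [set b : {ptws 'I_n -> F} | forall i, b i = a i]).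
  by move=> b /= e; apply: funext.
exact: (@filter_forall _ _ _ _ _ H).
Qed.

Lemma cont_disc (A : topologicalType) (F : choiceType) (f : A -> discrete_topology F) :
  (forall x, nbhs x (f @^-1` [set f x])) -> continuous f.
Proof.
move=> H x N /= /nbhs_singleton Nfx.
by apply: (@filterS _ _ _ (f @^-1` [set f x])) => [y /= ->|]; last exact: H.
Qed.

Section Top.
Variables (Omega : nat -> topologicalType) (X : topologicalType).
Local Notation T := (term Omega X).

Lemma good_loc (F : finType) d (phi : T -> F) : good d phi ->
  forall s, exists B, basic_nbhd s B /\ forall s', B s' -> phi s' = phi s.
Proof.
move=> [hd cd ld]; elim/term_rect' => [x|n o ts IH].
  have [U [oU Ux c]] := ld x.
  exists [set s | exists2 y, U y & s = Var _ y]; split; first exact: bn_var.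
  by move=> s' [y Uy ->]; exact: c.
have /choice [Bf HBf] := IH.
have [U [oU Uo c]] := cd n (fun i => phi (ts i)) o.
exists [set s | exists o' ts', [/\ s = Op o' ts', U o' & forall i, Bf i (ts' i)]]; split.
  by apply: bn_op => // i; case: (HBf i).
move=> s' [o' [ts' [-> Uo' Bts']]]; rewrite !(hom_Op hd) -(c o' Uo').
by congr d; apply: funext => i; case: (HBf i) => _ ->.
Qed.

Lemma good_top (F : finType) d (phi : T -> F) : good d phi ->
  [/\ finite_set [set: discrete_topology F], (forall U : set (discrete_topology F), open U),
      @stone_alg Omega (discrete_topology F) d,
      continuous (phi : T -> discrete_topology F) &
      continuous ((fun x => phi (Var _ x)) : X -> discrete_topology F)].
Proof.
move=> gd; have [hd cd ld] := gd; split.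
- exact: finite_finset.
- exact: discrete_open.
- split.
  + move=> n; apply: cont_disc => -[o a] /=.
    have [U [oU Uo c]] := cd n a o.
    apply: (@filterS _ _ _ (U `*` [set a])).
      by move=> [o' a'] /= [/c + ->].
    exists (U, [set a]); last by [].
    split; first exact: open_nbhs_nbhs.
    by apply: ptws_set1 => x; exact: discrete_set1.
  + by apply: finite_compact; exact: finite_finset.
  + exact: discrete_hausdorff.
  + split.
      move=> x y xy; exists [set x]; split; first exact: discrete_open.
        by rewrite inE.
      by rewrite inE /= => /eqP; rewrite eq_sym (negbTE xy).
    move=> x U oU Ux; exists [set x]; split => //; last by move=> y ->.
    by split; [exact: discrete_open|exact: discrete_closed].
- apply: cont_disc => s; apply/nbhs_termP.
  have [B [HB c]] := good_loc gd s.
  by exists B; split => // s' /c.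
- apply: cont_disc => x; have [U [oU Ux c]] := ld x.
  by apply: (@filterS _ _ _ U); [move=> y /c|exact: open_nbhs_nbhs].
Qed.
End Top.

Lemma ptws_box (n : nat) (A : topologicalType) (f : {ptws 'I_n -> A}) (Q : set {ptws 'I_n -> A}) :
  nbhs f Q -> exists W : 'I_n -> set A, (forall i, nbhs (f i) (W i)) /\
     forall g : 'I_n -> A, (forall i, W i (g i)) -> Q g.
Proof.
pose BX := [set Q : set {ptws 'I_n -> A} | exists W : 'I_n -> set A, (forall i, nbhs (f i) (W i)) /\
     forall g : 'I_n -> A, (forall i, W i (g i)) -> Q g].
have BXF : Filter BX.
  split.
  - by exists (fun _ => setT); split => // i; exact: filterT.
  - move=> P R [W1 [n1 s1]] [W2 [n2 s2]]; exists (fun i => W1 i `&` W2 i); split.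
      by move=> i; apply: filterI.
    by move=> g Hg; split; [apply: s1 => i; case: (Hg i)|apply: s2 => i; case: (Hg i)].
  - by move=> P R PR [W [nW sW]]; exists W; split => // g /sW /PR.
suff : cvg_to BX (nbhs f) by move=> /(_ Q) H /H.
apply/(@cvg_sup _ _ (fun i => Topological.class (initial_topology (fun g : (forall i : 'I_n, A) => g i))) BX f) => i.
move=> W; rewrite (@nbhsE (initial_topology (fun g : (forall i : 'I_n, A) => g i))) => -[B [oB Bf] BW].
case: oB => C oC eB.
exists (fun j => if j == i then C else setT); split.
  move=> j; case: eqP => [->|_]; last exact: filterT.
  by apply: open_nbhs_nbhs; split => //; move: Bf; rewrite -eB.
move=> g Hg; apply: BW; rewrite -eB /=; have := Hg i; by rewrite eqxx.
Qed.


Section Sep.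
Variables (Omega : nat -> topologicalType) (X : topologicalType).
Hypotheses (hX : zero_dim X) (hO : forall n, zero_dim (Omega n)).
Local Notation T := (term Omega X).

Lemma sep (a b : T) : a <> b -> exists B, basic_nbhd a B /\ ~ B b.
Proof.
have /choice [full Hfull] := @bn_exists Omega X.
elim/term_rect': a b => [x|n o ts IH] b ab.
  case: b ab => [y|m o' ts'] ab.
    have xy : x != y by apply/eqP => e; apply: ab; rewrite e.
    have [A [oA xA yA]] := hX.1 x y xy.
    exists [set s | exists2 z, A z & s = Var _ z]; split.
      by apply: bn_var => //; move: xA; rewrite inE.
    move=> [z Az [e]]; subst z; move: yA; rewrite inE; exact.
  exists [set s | exists2 z, setT z & s = Var _ z]; split; first by apply: bn_var => //; exact: openT.
  by move=> [z _].
have shape : exists B, basic_nbhd (Op o ts) B /\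
   B = [set s | exists o'' ts'', [/\ s = Op o'' ts'', setT o'' & forall i, full (ts i) (ts'' i)]].
  by eexists; split; [apply: bn_op; [exact: openT|by []|move=> i; exact: Hfull]|].
have [Bs [HBs eBs]] := shape.
case: b ab => [y|m o' ts'] ab.
  by exists Bs; split => //; rewrite eBs => -[? [? []]].
case: (Nat.eq_dec m n) => [emn|nmn]; last first.
  exists Bs; split => //; rewrite eBs => -[o2 [ts2 [e _ _]]].
  by apply: nmn; exact: Op_arity e.
subst m.
case: (pselect (o = o')) => [eo|neo].
  subst o'.
  have [i ni] : exists i, ts i <> ts' i.
    apply: contrapT => H; apply: ab; congr Op; apply/ffunP => i.
    by apply: contrapT => ne; apply: H; exists i.
  have [Bi [HBi nBi]] := IH i _ ni.
  pose C j := if j == i then Bi else full (ts j).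
  exists [set s | exists o'' ts'', [/\ s = Op o'' ts'', setT o'' & forall j, C j (ts'' j)]].
  split.
    apply: bn_op => //; first exact: openT.
    by move=> j; rewrite /C; case: eqP => [->|_].
  move=> [o2 [ts2 [e _ Cts]]]; have [_ ets] := Op_inj e; subst ts2.
  by apply: nBi; have := Cts i; rewrite /C eqxx.
have oo : o != o' by apply/eqP.
have [A [oA oAi o'A]] := (hO n).1 o o' oo.
exists [set s | exists (o'' : Omega n) (ts'' : {ffun 'I_n -> T}), [/\ s = Op o'' ts'', A o'' & forall j, full (ts j) (ts'' j)]].
split.
  apply: (@bn_op _ _ n o ts A (fun j => full (ts j))); [exact: oA|by move: oAi; rewrite inE|move=> i; exact: Hfull].
move=> [o2 [ts2 [e Ao2 _]]]; have [eo _] := Op_inj e; subst o2.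
by move: o'A; rewrite inE.
Qed.

Lemma fin_sep (a b : T) : a <> b ->
  exists (F : finType) (d : ops Omega F) (phi : T -> F), good d phi /\ phi a <> phi b.
Proof.
move=> /sep [B [HB nB]].
have [B' [B'a sB' [F [d [phi [gd st]]]]]] := key hX hO HB.
exists F, d, phi; split => // e; apply: nB; apply: sB'; exact: st e B'a.
Qed.

Lemma fin_nbhd (t : T) N : nbhs t N ->
  exists (F : finType) (d : ops Omega F) (phi : T -> F), good d phi /\
    forall s, phi s = phi t -> N s.
Proof.
move=> /nbhs_termP [B [HB BN]].
have [B' [B't sB' [F [d [phi [gd st]]]]]] := key hX hO HB.
exists F, d, phi; split => // s e; apply: BN; apply: sB'; exact: st (esym e) B't.
Qed.
End Sep.

Section Eval.
Local Unset Implicit Arguments.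
Variables (Omega : nat -> topologicalType) (X : topologicalType).
Local Notation T := (term Omega X).
Variables (Fr : Type) (opF : ops Omega Fr) (iota : X -> Fr).

Fixpoint evalT (t : T) : Fr :=
  match t with
  | Var x => iota x
  | Op n o ts => opF n o (fun i => evalT (ts i))
  end.

Lemma evalT_hom : is_hom (@term_ops Omega X) opF evalT.
Proof.
move=> n o a; rewrite /term_ops /=; congr (opF n o); apply: funext => i /=.
by rewrite ffunE.
Qed.
End Eval.

Lemma hom_unique (Omega : nat -> topologicalType) (X : topologicalType) (A : Type)
  (opA : ops Omega A) (g1 g2 : term Omega X -> A) :
  is_hom (@term_ops Omega X) opA g1 -> is_hom (@term_ops Omega X) opA g2 ->
  (forall x, g1 (Var _ x) = g2 (Var _ x)) -> g1 = g2.
Proof.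
move=> h1 h2 ev; apply: funext; elim/term_rect' => [x|n o ts IH]; first exact: ev.
rewrite (hom_Op h1) (hom_Op h2); congr (opA n o); exact: funext.
Qed.


Lemma evalT_cont (Omega : nat -> topologicalType) (X : topologicalType) (Fr : topologicalType)
  (opF : ops Omega Fr) (iota : X -> Fr) :
  top_alg opF -> continuous iota -> continuous (@evalT Omega X Fr opF iota).
Proof.
move=> top ci.
suff H : forall s W, nbhs (@evalT Omega X Fr opF iota s) W ->
    exists B, basic_nbhd s B /\ forall s', B s' -> W (@evalT Omega X Fr opF iota s').
  move=> s W /H [B [HB sB]]; apply/nbhs_termP; exists B; split => // s'; exact: sB.
elim/term_rect' => [x|n o ts IH] W.
  move=> /ci; rewrite nbhsE => -[U [oU Ux] sU].
  exists [set s | exists2 y, U y & s = Var _ y]; split; first exact: bn_var.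
  by move=> s' [y Uy ->]; apply: sU.
move=> /= /(top n (o, fun i => @evalT Omega X Fr opF iota (ts i))) [[P Q] [/= nP nQ] sPQ].
have [Wi [nWi sWi]] := @ptws_box _ _ _ _ nQ.
have /choice [Bf HBf] : forall i, exists B, basic_nbhd (ts i) B /\
    forall s', B s' -> Wi i (@evalT Omega X Fr opF iota s') by move=> i; exact: IH.
move: nP; rewrite nbhsE => -[U [oU Uo] sU].
exists [set s | exists o' ts', [/\ s = Op o' ts', U o' & forall i, Bf i (ts' i)]]; split.
  by apply: bn_op => // i; case: (HBf i).
move=> s' [o' [ts' [-> Uo' Bts']]] /=.
apply: (sPQ (o', fun i => @evalT Omega X Fr opF iota (ts' i))); split; first exact: sU.
by apply: sWi => i; case: (HBf i) => _; apply.
Qed.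

Unset Implicit Arguments.
Theorem proposition4p7 (Omega : nat -> topologicalType) (X : topologicalType) :
  zero_dim X -> (forall n : nat, zero_dim (Omega n)) ->
  residually_finite (@term_ops Omega X) /\
  forall (Fr : topologicalType) (opF : ops Omega Fr) (iota : X -> Fr),
    free_stone_alg opF iota ->
    exists h : term Omega X -> Fr,
      [/\ [/\ continuous h, is_hom (@term_ops Omega X) opF h
            & h \o @Var Omega X = iota],
          (forall h' : term Omega X -> Fr,
              continuous h' -> is_hom (@term_ops Omega X) opF h' ->
              h' \o @Var Omega X = iota -> h' = h),
          injective h,
          h @` setT = generated_subalg opF (range iota) &
          exists g : Fr -> term Omega X,
            (forall t, g (h t) = t) /\
            {within generated_subalg opF (range iota), continuous g}].
Proof.
move=> hX hO.
have RF : residually_finite (@term_ops Omega X).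
  move=> a b ab; have [F [d [phi [gd ne]]]] := fin_sep hX hO ab.
  have [fin op st cphi _] := good_top gd.
  exists (discrete_topology F), d, phi; split => //; first by case: st.
  by split => //; case: gd.
split => // Fr opF iota [stF ciota dns univ].
pose h := @evalT Omega X Fr opF iota.
have hhom : is_hom (@term_ops Omega X) opF h by exact: evalT_hom.
have factor : forall (F : finType) d (phi : term Omega X -> F), good d phi ->
    exists hp : Fr -> discrete_topology F, continuous hp /\ forall t, hp (h t) = phi t.
  move=> F d phi gd; have [_ _ st cphi cvar] := good_top gd.
  have [hp [[chp hhp ehp] _]] := univ _ _ st _ cvar.
  exists hp; split => // t.
  have -> : phi = hp \o h; last by [].
  apply: (@hom_unique _ _ _ d); first by case: gd => ? _ _.
    by move=> n o a; rewrite [in LHS]/comp (hhom n o a) hhp.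
  by move=> x /=; have := congr1 (fun f => f x) ehp.
have hinj : injective h.
  move=> a b e; apply: contrapT => ab.
  have [F [d [phi [gd ne]]]] := fin_sep hX hO ab.
  have [hp [_ hpE]] := factor _ _ _ gd.
  by apply: ne; rewrite -!hpE e.
have himg : h @` setT = generated_subalg opF (range iota).
  apply/seteqP; split.
    move=> _ [t _ <-] S sS cS; elim/term_rect': t => [x|n o ts IH].
      by apply: sS; exists x.
    exact: cS.
  move=> y; apply.
    by move=> _ [x _ <-]; exists (Var _ x).
  move=> n o a Ha; have /choice [ts Hts] : forall i, exists t, h t = a i.
    by move=> i; have [t _ <-] := Ha i; exists t.
  exists (Op o (finfun ts)) => //=; congr (opF n o); apply: funext => i.
  by rewrite ffunE Hts.
have gex : forall y : Fr, exists t, (exists t', h t' = y) -> h t = y.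
  move=> y; case: (pselect (exists t', h t' = y)) => [[t' e]|ne].
    by exists t'.
  have [z [_ Az]] := dns setT (ex_intro _ y I) openT.
  by move: Az; rewrite -himg => -[t _ _]; exists t.
have /choice [g Hg] := gex.
have ghK : forall t, g (h t) = t by move=> t; apply: hinj; apply: Hg; exists t.
exists h; split => //.
- split => //; case: stF => top _ _ _; exact: evalT_cont top ciota.
- move=> h' ch' hh' e'; apply: hom_unique => // x.
  by have := congr1 (fun f => f x) e'.
- exists g; split => //.
  apply/subspace_continuousP => y Ay.
  move: (Ay); rewrite -himg => -[t _ ety]; subst y.
  move=> N; rewrite /from_subspace /= ghK => Nt.
  have [F [d [phi [gd hN]]]] := fin_nbhd hX hO Nt.
  have [hp [chp hpE]] := factor _ _ _ gd.
  have := chp (h t) [set hp (h t)] (discrete_set1 _).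
  move=> /= nh.
  change (within (range h) (nbhs (h t)) (g @^-1` N)).
  rewrite /within /prop_near1 /=.
  apply: (@filterS _ _ _ (hp @^-1` [set hp (h t)])) => // z /= ez Az.
  move: Az => -[t' _ ezt]; subst z.
  by rewrite ghK; apply: hN; rewrite -!hpE.
Qed.
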